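(* $u(4,8)=3$ and $\varepsilon(4,8)=4$.
   Context: All matrices are binary. For a nonempty set $S$ of columns of a binary matrix, let $z$ be the sum over the integers of the columns in $S$. $S$ is called $1$-free if no entry of $z$ equals $1$, and even if all entries of $z$ are even. For a binary $m\times n$ matrix $A$ with $m<n$: $\varepsilon(A)$ is the smallest cardinality of a nonempty even set of columns, and $u(A)$ the smallest cardinality of a nonempty $1$-free set of columns. For $m<n$, $\varepsilon(m,n)$ and $u(m,n)$ are the maxima of $\varepsilon(A)$, resp. $u(A)$, over all binary $m\times n$ matrices. *)

(* Defs.v *)
From mathcomp Require Import all_boot all_algebra.
Set Implicit Arguments. Unset Strict Implicit. Unset Printing Implicit Defensive.

Definition colsum (m n : nat) (A : 'M[bool]_(m, n)) (S : {set 'I_n}) (i : 'I_m) : nat :=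
  #|[set j in S | A i j]|.

Definition even_set (m n : nat) (A : 'M[bool]_(m, n)) (S : {set 'I_n}) : bool :=
  (S != set0) && [forall i, ~~ odd (colsum A S i)].

Definition onefree_set (m n : nat) (A : 'M[bool]_(m, n)) (S : {set 'I_n}) : bool :=
  (S != set0) && [forall i, colsum A S i != 1%N].

Definition is_min_size (n : nat) (P : {set 'I_n} -> bool) (k : nat) : Prop :=
  (exists S, P S /\ #|S| = k) /\ (forall S, P S -> k <= #|S|).

Definition eps_of (m n : nat) (A : 'M[bool]_(m, n)) (k : nat) : Prop :=
  is_min_size (even_set A) k.
Definition u_of (m n : nat) (A : 'M[bool]_(m, n)) (k : nat) : Prop :=
  is_min_size (onefree_set A) k.

Definition is_max_over (m n : nat) (f : 'M[bool]_(m, n) -> nat -> Prop) (k : nat) : Prop :=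
  (exists A, f A k) /\ (forall A v, f A v -> v <= k).

Definition eps_mn (m n k : nat) : Prop := is_max_over (@eps_of m n) k.
Definition u_mn (m n k : nat) : Prop := is_max_over (@u_of m n) k.

(* Main.v *)
Require Import Defs.
From mathcomp Require Import all_boot all_algebra.

Fixpoint comb {T} (k : nat) (l : seq T) {struct l} : seq (seq T) :=
  match l with
  | [::] => if k is 0 then [:: [::]] else [::]
  | x :: l' => if k is k'.+1 then map (cons x) (comb k' l') ++ comb k l' else [:: [::]]
  end.
Lemma mem_comb (T : eqType) (l : seq T) k t :
  (t \in comb k l) = subseq t l && (size t == k).
Proof.
elim: l k t => [|x l IH] k t /=.
  by case: k => [|k]; case: t => [|y t].
case: k => [|k].
  by case: t => [|y t] //=; rewrite andbF.
rewrite mem_cat IH.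
case: t => [|y t] /=.
  by rewrite andbF orbF; apply/mapP => -[s _].
case: (y =P x) => [->|nyx].
  apply/idP/idP.
    case/orP => [/mapP [s] | /andP [ss sz]].
      rewrite IH => /andP [ss sz] [ts]; subst s.
      by rewrite ss.
    by rewrite (subseq_trans (subseq_cons t x) ss) sz.
  move=> /andP [ss sz]; apply/orP; left; apply/mapP; exists t => //.
  by rewrite eqSS in sz; rewrite IH ss.
apply/idP/idP.
  by case/orP => [/mapP [s] _ [/nyx]|].
by move=> H; apply/orP; right.
Qed.

Fixpoint allbool (n : nat) : seq (seq bool) :=
  if n is n'.+1 then [seq b :: v | b <- [:: true; false], v <- allbool n'] else [:: [::]].
Definition Vnz := [seq v <- allbool 4 | has id v].
Definition condu (t : seq (seq bool)) :=
  all (fun n => count (fun v => nth false v n) t != 1) (iota 0 4).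
Definition conde (t : seq (seq bool)) :=
  all (fun n => ~~ odd (count (fun v => nth false v n) t)) (iota 0 4).
Definition code (i : nat) (j : nat) : bool :=
  nth false (nth [::] [:: [::true;false;false;false]; [::false;true;false;false];
   [::false;false;true;false];[::false;false;false;true];
   [::true;true;true;false];[::true;true;false;true];[::true;false;true;true];[::false;true;true;true]] j) i.
Definition T0 := map (fun j => map (fun i => code i j) (iota 0 4)) (iota 0 8).
Lemma chk1 : all (fun s => has condu (comb 3 s)) (comb 8 Vnz).
Proof. vm_compute. reflexivity. Qed.
Lemma chk2 : all (fun s => has conde (comb 3 s ++ comb 4 s)) (comb 8 Vnz).
Proof. vm_compute. reflexivity. Qed.
Lemma chk3 : all (fun t => ~~ condu t) (comb 1 T0 ++ comb 2 T0).
Proof. vm_compute. reflexivity. Qed.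
Lemma chk4 : all (fun t => ~~ conde t) (comb 1 T0 ++ comb 2 T0 ++ comb 3 T0).
Proof. vm_compute. reflexivity. Qed.
Lemma uniqVnz : uniq Vnz.
Proof. vm_compute. reflexivity. Qed.

Lemma allbool4 v : size v = 4 -> v \in allbool 4.
Proof.
case: v => [|a [|b [|c [|d [|]]]]] //= _.
by case: a; case: b; case: c; case: d; vm_compute.
Qed.

Definition colt (A : 'M[bool]_(4, 8)) (j : 'I_8) : seq bool := [seq A i j | i <- enum 'I_4].

Lemma size_colt A j : size (colt A j) = 4.
Proof. by rewrite size_map size_enum_ord. Qed.

Lemma nth_colt A j (i : 'I_4) : nth false (colt A j) i = A i j.
Proof. by rewrite (nth_map i) ?size_enum_ord // nth_ord_enum. Qed.

Lemma colsum_seq (A : 'M[bool]_(4, 8)) (idx : seq 'I_8) i :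
  uniq idx -> colsum A [set j in idx] i = count (A i) idx.
Proof.
move=> U; rewrite /colsum -size_filter -(elimT card_uniqP (filter_uniq (A i) U)).
by apply: eq_card => j; rewrite !inE mem_filter andbC.
Qed.

Lemma card_seq (idx : seq 'I_8) : uniq idx -> #|[set j in idx]| = size idx.
Proof. by move=> U; rewrite cardsE; apply/card_uniqP. Qed.

Lemma nz_seq (idx : seq 'I_8) : 0 < size idx -> [set j in idx] != set0.
Proof. by case: idx => [|x s] // _; apply/set0Pn; exists x; rewrite inE mem_head. Qed.

Lemma distinct_case (A : 'M[bool]_(4, 8)) (P : pred (seq (seq bool))) :
  injective (colt A) -> (forall j, has id (colt A j)) ->
  (forall s, s \in comb 8 Vnz -> exists t, subseq t s /\ P t) ->
  exists t (idx : seq 'I_8), [/\ P t, uniq idx, size idx = size t &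
     forall i : 'I_4, count (A i) idx = count (fun v => nth false v i) t].
Proof.
move=> inj nz H.
set img := map (colt A) (enum 'I_8).
have Uimg : uniq img by rewrite map_inj_uniq ?enum_uniq.
have sub : {subset img <= Vnz}.
  move=> v /mapP [j _ ->]; rewrite mem_filter nz allbool4 //; exact: size_colt.
set F := [seq v <- Vnz | v \in img].
have UF : uniq F by rewrite filter_uniq ?uniqVnz.
have pF : perm_eq F img.
  apply: uniq_perm => // v; rewrite mem_filter.
  by case: (boolP (v \in img)) => // /sub ->.
have sF : size F = 8 by rewrite (perm_size pF) size_map size_enum_ord.
have : F \in comb 8 Vnz by rewrite mem_comb filter_subseq sF.
move/H => [t [st Pt]].
have Ut : uniq t := subseq_uniq st UF.
have tF : {subset t <= img}.
  by move=> v /(mem_subseq st); rewrite (perm_mem pF).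
set idx := [seq j <- enum 'I_8 | colt A j \in t].
have Uidx : uniq idx by rewrite filter_uniq ?enum_uniq.
have pt : perm_eq (map (colt A) idx) t.
  apply: uniq_perm => //; first by rewrite map_inj_uniq.
  move=> v; apply/mapP/idP.
    by move=> [j]; rewrite mem_filter => /andP [jt _] ->.
  move=> vt; have /mapP [j _ e] := tF _ vt.
  by exists j => //; rewrite mem_filter -e vt mem_enum.
exists t, idx; split => //.
  by rewrite -(size_map (colt A)) (perm_size pt).
move=> i; rewrite -(permP pt) count_map; apply: eq_count => j /=.
by rewrite nth_colt.
Qed.

Lemma condu_row t : condu t -> forall i : 'I_4, count (fun v => nth false v i) t != 1.
Proof. by move=> /allP H i; apply: H; rewrite mem_iota /=. Qed.
Lemma conde_row t : conde t -> forall i : 'I_4, ~~ odd (count (fun v => nth false v i) t).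
Proof. by move=> /allP H i; apply: H; rewrite mem_iota /=. Qed.

Lemma zero_or_dup (A : 'M[bool]_(4, 8)) :
  (exists j, forall i, A i j = false) \/
  (exists j k, j != k /\ forall i, A i j = A i k) \/
  (injective (colt A) /\ forall j, has id (colt A j)).
Proof.
case: (pickP (fun j => ~~ has id (colt A j))) => [j zj | hnz].
  left; exists j => i; apply/negP => Aij; move/negP: zj; apply.
  by apply/hasP; exists (A i j) => //; apply: map_f; rewrite mem_enum.
right; case: (pickP (fun p : 'I_8 * 'I_8 => (p.1 != p.2) && (colt A p.1 == colt A p.2)))
  => [[j k] /andP [jk /eqP cjk] | hinj].
  by left; exists j, k; split => // i; rewrite -!nth_colt cjk.
right; split; last by move=> j; have := hnz j => /= /negbFE.
move=> j k e; apply/eqP; apply: contraT => ne.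
by have := hinj (j, k); rewrite /= ne e eqxx.
Qed.

Lemma u_upper (A : 'M[bool]_(4, 8)) : exists S, onefree_set A S /\ #|S| <= 3.
Proof.
suff [idx [U sz nz H]] : exists idx : seq 'I_8, [/\ uniq idx, size idx <= 3, 0 < size idx &
    forall i, count (A i) idx != 1].
  exists [set j in idx]; rewrite card_seq //; split => //.
  by rewrite /onefree_set nz_seq //=; apply/forallP => i; rewrite colsum_seq.
case: (zero_or_dup A) => [[j Hj] | [[j [k [jk Hjk]]] | [inj nz]]].
- by exists [:: j]; split => // i; rewrite /= Hj.
- exists [:: j; k]; split => //=; first by rewrite inE jk.
  by move=> i; rewrite Hjk; case: (A i k).
- have [t [idx [/andP [Pt /eqP t3] U sz H]]] :
    exists t (idx : seq 'I_8), [/\ condu t && (size t == 3), uniq idx, size idx = size t &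
     forall i : 'I_4, count (A i) idx = count (fun v => nth false v i) t].
    apply: distinct_case => // s hs.
    have /hasP [t ht Pt] := allP chk1 s hs.
    move: ht; rewrite mem_comb => /andP [st st3].
    by exists t; split => //; rewrite Pt st3.
  exists idx; split => //; rewrite ?sz ?t3 //.
  by move=> i; rewrite H; apply: condu_row.
Qed.

Lemma e_upper (A : 'M[bool]_(4, 8)) : exists S, even_set A S /\ #|S| <= 4.
Proof.
suff [idx [U sz nz H]] : exists idx : seq 'I_8, [/\ uniq idx, size idx <= 4, 0 < size idx &
    forall i, ~~ odd (count (A i) idx)].
  exists [set j in idx]; rewrite card_seq //; split => //.
  by rewrite /even_set nz_seq //=; apply/forallP => i; rewrite colsum_seq.
case: (zero_or_dup A) => [[j Hj] | [[j [k [jk Hjk]]] | [inj nz]]].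
- by exists [:: j]; split => // i; rewrite /= Hj.
- exists [:: j; k]; split => //=; first by rewrite inE jk.
  by move=> i; rewrite Hjk; case: (A i k).
- have [t [idx [/andP [Pt /andP [t1 t4]] U sz H]]] :
    exists t (idx : seq 'I_8), [/\ conde t && (0 < size t <= 4), uniq idx, size idx = size t &
     forall i : 'I_4, count (A i) idx = count (fun v => nth false v i) t].
    apply: distinct_case => // s hs.
    have /hasP [t ht Pt] := allP chk2 s hs.
    move: ht; rewrite mem_cat !mem_comb => /orP [] /andP [st /eqP st3];
    by exists t; split => //; rewrite Pt st3.
  exists idx; split => //; rewrite ?sz //.
  by move=> i; rewrite H; apply: conde_row.
Qed.

Definition A0 : 'M[bool]_(4, 8) := \matrix_(i, j) code i j.

Lemma colt_A0 j : colt A0 j = map (fun i => code i j) (iota 0 4).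
Proof. rewrite /colt -val_enum_ord -map_comp. by elim: (enum _) => //= i s ->; rewrite mxE. Qed.

Lemma T0E : map (colt A0) (enum 'I_8) = T0.
Proof.
rewrite /T0 -[iota 0 8]val_enum_ord -map_comp. by elim: (enum _) => //= j s ->; rewrite colt_A0.
Qed.

Lemma small_A0 (S : {set 'I_8}) :
  let idx := [seq j <- enum 'I_8 | j \in S] in
  let t := map (colt A0) idx in
  [/\ S = [set j in idx], uniq idx, t \in comb #|S| T0 &
    forall i : 'I_4, colsum A0 S i = count (fun v => nth false v i) t].
Proof.
move=> idx t.
have U : uniq idx by rewrite filter_uniq ?enum_uniq.
have SE : S = [set j in idx].
  by apply/setP => j; rewrite inE mem_filter mem_enum andbT.
split => //.
  rewrite mem_comb -T0E map_subseq ?filter_subseq //= size_map.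
  by rewrite {1}SE card_seq.
move=> i; rewrite {1}SE colsum_seq // count_map; apply: eq_count => j /=.
by rewrite nth_colt.
Qed.

Lemma in_catl (T : eqType) (x : T) a b : x \in a -> x \in a ++ b.
Proof. by rewrite mem_cat => ->. Qed.
Lemma in_catr (T : eqType) (x : T) a b : x \in b -> x \in a ++ b.
Proof. by rewrite mem_cat => ->; rewrite orbT. Qed.

Lemma low_u (S : {set 'I_8}) : onefree_set A0 S -> 3 <= #|S|.
Proof.
move=> /andP [nz /forallP H].
have [_ _ ht Hc] := small_A0 S.
rewrite leqNgt; apply/negP => small.
have c0 : #|S| != 0 by apply: contra nz => /eqP /cards0_eq ->.
set t := map _ _ in ht Hc.
have : ~~ condu t.
  apply: (allP chk3); rewrite mem_cat.
  move: small c0 ht; case: #|S| => [|[|[|]]] // _ _.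
  - by move=> h; apply/orP; left.
  - by move=> h; apply/orP; right.

move/negP => nc; apply: nc; apply/allP => n; rewrite mem_iota add0n /= => hn.
by have := H (Ordinal hn); rewrite Hc => h; exact h.
Qed.

Lemma low_e (S : {set 'I_8}) : even_set A0 S -> 4 <= #|S|.
Proof.
move=> /andP [nz /forallP H].
have [_ _ ht Hc] := small_A0 S.
rewrite leqNgt; apply/negP => small.
have c0 : #|S| != 0 by apply: contra nz => /eqP /cards0_eq ->.
set t := map _ _ in ht Hc.
have : ~~ conde t.
  apply: (allP chk4).
  move: small c0 ht; case: #|S| => [|[|[|[|]]]] // _ _ h.
  - exact: in_catl.
  - by apply: in_catr; apply: in_catl.
  - by apply: in_catr; apply: in_catr.
move/negP => nc; apply: nc; apply/allP => n; rewrite mem_iota add0n /= => hn.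
by have := H (Ordinal hn); rewrite Hc => h; exact h.
Qed.

Theorem theorem7p1 : u_mn 4 8 3 /\ eps_mn 4 8 4.
Proof.
split; split.
- exists A0; split; last exact: low_u.
  have [S [oS cS]] := u_upper A0.
  by exists S; split => //; apply/eqP; rewrite eqn_leq cS low_u.
- move=> A v [_ Hmin]; have [S [oS cS]] := u_upper A.
  exact: leq_trans (Hmin S oS) cS.
- exists A0; split; last exact: low_e.
  have [S [oS cS]] := e_upper A0.
  by exists S; split => //; apply/eqP; rewrite eqn_leq cS low_e.
- move=> A v [_ Hmin]; have [S [oS cS]] := e_upper A.
  exact: leq_trans (Hmin S oS) cS.
Qed.
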